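(* Let $G$ be a locally compact group acting properly and cocompactly on a smooth manifold $Y$, $T:Y\to Y$ a diffeomorphism commuting with the $G$-action, $M=(Y\times\mathbb R)/\mathbb Z$ the suspension for $n\cdot(y,t)=(T^ny,t-n)$ with classes $[y,t]$, $G$-action $x[y,t]=[xy,t]$ and suspension flow $\varphi_s[y,t]=[y,t+s]$. Let $g\in G$, and assume that for every $n\in\mathbb Z\setminus\{0\}$ the set $Y^{g^{-1}T^n}$ is empty or discrete and $\det(1-D_y(g^{-1}T^n))\neq0$ for all $y\in Y^{g^{-1}T^n}$. For $n\in L_g(\varphi)$ let $$f_n:Y^{g^{-1}T^n}\to\{\text{connected components of }M^{g^{-1}\varphi_n}\},\qquad f_n(y)=\{[y,t]:t\in\mathbb R\}.$$ Then, for $n\in L_g(\varphi)$, the fibres of $f_n$ are finite if and only if $g$ lies in a compact subgroup of $G$.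
   Context: $L_g(\varphi)=\{l\in\mathbb R\setminus\{0\}:\exists m\in M,\ \varphi_l(m)=gm\}$ (for the suspension flow this is a subset of $\mathbb Z\setminus\{0\}$). $M^{g^{-1}\varphi_n}$ is the set of points of $M$ fixed by $g^{-1}\circ\varphi_n$. *)

(* Defs.v *)
From HB Require Import structures.
From mathcomp Require Import all_boot all_order all_algebra.
From mathcomp Require Import all_classical all_reals all_analysis.
From mathcomp Require Import generic_quotient.
From mathcomp Require Import Rstruct Rstruct_topology.
Set Implicit Arguments. Unset Strict Implicit. Unset Printing Implicit Defensive.
Import Order.TTheory GRing.Theory Num.Theory.
Import numFieldNormedType.Exports.
Local Open Scope classical_set_scope.
Local Open Scope ring_scope.

Notation RR := Rdefinitions.R.

Section TopGroup.
Variables (G : topologicalType) (mul : G -> G -> G) (inv : G -> G) (one : G).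

Record topological_group : Prop := {
  tg_assoc : forall x y z, mul x (mul y z) = mul (mul x y) z;
  tg_mul1 : forall x, mul one x = x;
  tg_mulV : forall x, mul (inv x) x = one;
  tg_mul_cont : continuous (fun p : G * G => mul p.1 p.2);
  tg_inv_cont : continuous inv }.

Definition locally_compact_group : Prop :=
  [/\ topological_group, hausdorff_space G & locally_compact [set: G]].

Definition compact_subgroup (K : set G) : Prop :=
  [/\ compact K, K one, (forall x y, K x -> K y -> K (mul x y))
    & (forall x, K x -> K (inv x))].
End TopGroup.

Section Smooth.
Variable d : nat.
Local Notation V := 'rV[RR]_d.

Fixpoint Ck (k : nat) (W : set V) (F : V -> V) : Prop :=
  match k with
  | 0 => forall x, W x -> {for x, continuous F}
  | k.+1 => (forall x, W x -> {for x, continuous F}) /\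
            forall v : V, (forall x, W x -> derivable F x v) /\
                          Ck k W (fun x => derive F x v)
  end.

Definition smooth_on (W : set V) (F : V -> V) : Prop := forall k, Ck k W F.
End Smooth.

Record atlas (Y : Type) (d : nat) := Atlas {
  at_index : Type;
  at_dom : at_index -> set Y;
  at_chart : at_index -> Y -> 'rV[RR]_d;
  at_inv : at_index -> 'rV[RR]_d -> Y }.      (* phi_i^{-1} on phi_i(U_i) *)
Arguments at_index {Y d} a.
Arguments at_dom {Y d} a i _.
Arguments at_chart {Y d} a i _.
Arguments at_inv {Y d} a i _.

Section Manifold.
Variables (Y : topologicalType) (d : nat) (A : atlas Y d).
Local Notation U := (at_dom A).
Local Notation phi := (at_chart A).
Local Notation psi := (at_inv A).

Record smooth_atlas : Prop := {
  sa_open : forall i, open (U i);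
  sa_cover : forall y, exists i, U i y;
  sa_img_open : forall i, open (phi i @` U i);
  sa_chart_cont : forall i y, U i y -> {for y, continuous (phi i)};
  sa_inv_cont : forall i v, (phi i @` U i) v -> {for v, continuous (psi i)};
  sa_invK : forall i y, U i y -> psi i (phi i y) = y;
  sa_trans : forall i j,
    smooth_on (phi i @` (U i `&` U j)) (phi j \o psi i) }.

Definition smooth_manifold : Prop :=
  [/\ hausdorff_space Y, second_countable (T := Y) & smooth_atlas].

Definition smooth_map (f : Y -> Y) : Prop :=
  (forall y, {for y, continuous f}) /\
  forall i j, smooth_on (phi i @` (U i `&` f @^-1` U j)) (phi j \o f \o psi i).

Definition diffeomorphism (f finv : Y -> Y) : Prop :=
  [/\ smooth_map f, smooth_map finv, cancel f finv & cancel finv f].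

(* Matrix of D_y f in the chart i (row-vector convention: row a is the
   derivative in the direction of the a-th basis vector). *)
Definition jac (f : Y -> Y) (i : at_index A) (y : Y) : 'M[RR]_d :=
  \matrix_(a < d, b < d)
     (derive (phi i \o f \o psi i) (phi i y) (delta_mx 0 a : 'rV[RR]_d)) 0 b.

Definition fixpts (f : Y -> Y) : set Y := [set y | f y = y].

Definition discrete_subset (S : set Y) : Prop :=
  forall y, S y -> exists2 N, nbhs y N & N `&` S = [set y].
End Manifold.

Section Actions.
Variables (G Y : topologicalType) (mul : G -> G -> G) (one : G)
  (act : G -> Y -> Y).

Definition continuous_action : Prop :=
  [/\ forall y, act one y = y,
      forall x z y, act (mul x z) y = act x (act z y)
    & continuous (fun p : G * Y => act p.1 p.2)].

Definition proper_action : Prop :=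
  forall K : set (Y * Y), compact K ->
    compact ((fun p : G * Y => (act p.1 p.2, p.2)) @^-1` K).

Definition cocompact_action : Prop :=
  exists2 K : set Y, compact K & forall y, exists x z, K z /\ y = act x z.
End Actions.

Definition Tpow (Y : Type) (T Tinv : Y -> Y) (n : int) : Y -> Y :=
  match n with
  | Posz k => iter k T
  | Negz k => iter k.+1 Tinv
  end.

(* Two points are identified iff they have the same normal form        *)
(* (T^{floor t} y, t - floor t) in the fundamental domain Y x [0,1);   *)
(* for T bijective with inverse Tinv this is exactly the orbit         *)
(* equivalence of the Z-action.                                        *)
Section Suspension.
Local Open Scope quotient_scope.
Variables (Y : topologicalType) (T Tinv : Y -> Y).

Definition susp_nf (p : Y * RR) : Y * RR :=
  (Tpow T Tinv (Num.floor p.2) p.1, p.2 - (Num.floor p.2)%:~R).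

Definition susp_rel (p q : Y * RR) : bool := susp_nf p == susp_nf q.

Lemma susp_rel_refl : reflexive susp_rel.
Proof. by move=> p; rewrite /susp_rel eqxx. Qed.
Lemma susp_rel_sym : symmetric susp_rel.
Proof. by move=> p q; rewrite /susp_rel eq_sym. Qed.
Lemma susp_rel_trans : transitive susp_rel.
Proof. by move=> q p r; rewrite /susp_rel => /eqP -> /eqP ->. Qed.

Definition susp_equiv := EquivRel susp_rel susp_rel_refl susp_rel_sym
  susp_rel_trans.

Definition susp : topologicalType := quotient_topology {eq_quot susp_equiv}.

Definition scls (y : Y) (t : RR) : susp := \pi_susp (y, t).

Definition sflow (s : RR) (m : susp) : susp :=
  scls (repr m).1 ((repr m).2 + s).

Definition sact (G : Type) (act : G -> Y -> Y) (x : G) (m : susp) : susp :=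
  scls (act x (repr m).1) (repr m).2.

Definition Lg (G : Type) (act : G -> Y -> Y) (g : G) : set RR :=
  [set l | l != 0 /\ exists m : susp, sflow l m = sact act g m].

Definition sfix (G : Type) (act : G -> Y -> Y) (ginv : G) (n : int) : set susp :=
  [set m | sact act ginv (sflow n%:~R m) = m].

Definition fn (y : Y) : set susp := [set scls y t | t in [set: RR]].
End Suspension.

Arguments sflow {Y} T Tinv s m.
Arguments sact {Y} T Tinv {G} act x m.
Arguments sfix {Y} T Tinv {G} act ginv n _.
Arguments fn {Y} T Tinv y _.

(* Main.v *)
Require Import Defs.
From HB Require Import structures.
From mathcomp Require Import all_boot all_order all_algebra.
From mathcomp Require Import all_classical all_reals all_analysis.
From mathcomp Require Import generic_quotient.
From mathcomp Require Import Rstruct Rstruct_topology.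
Import Order.TTheory GRing.Theory Num.Theory.
Local Open Scope classical_set_scope.
Local Open Scope ring_scope.
Section TP.
Variables (Y : Type) (T Tinv : Y -> Y).
Hypotheses (TK : cancel T Tinv) (KT : cancel Tinv T).

Lemma TpowS z y : Tpow T Tinv (z + 1) y = Tpow T Tinv z (T y).
Proof.
case: z => [k|[|k]].
- have -> : (Posz k + 1) = Posz k.+1 by rewrite -addn1 PoszD.
  by rewrite /Tpow iterSr.
- have -> : Negz 0 + 1 = 0 by rewrite NegzE addNr.
  by rewrite /Tpow /=; rewrite TK.
- have -> : Negz k.+1 + 1 = Negz k by rewrite !NegzE -addn1 PoszD opprD addrK.
  by rewrite /Tpow [in RHS]iterSr TK.
Qed.

Lemma TpowP (k : nat) y : Tpow T Tinv k y = iter k T y.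
Proof. by []. Qed.

Lemma TpowD a b y : Tpow T Tinv (a + b) y = Tpow T Tinv a (Tpow T Tinv b y).
Proof.
have pos : forall (a : int) (k : nat) y, Tpow T Tinv (a + k) y = Tpow T Tinv a (iter k T y).
  move=> a' k; elim: k a' => [|k IH] a' y'; first by rewrite addr0.
  by rewrite -[k.+1]addn1 PoszD addrA TpowS IH addn1 iterSr.
case: b => [k|k]; first exact: pos.
have -> : Tpow T Tinv (Negz k) y = iter k.+1 Tinv y by [].
have ea : a = (a + Negz k) + k.+1 by rewrite NegzE -addrA addNr addr0.
rewrite [in RHS]ea pos; congr (Tpow _ _ _ _).
elim: k.+1 => // j IH; by rewrite iterSr /= KT.
Qed.


Lemma iter_comm (f h : Y -> Y) : (forall y, h (f y) = f (h y)) ->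
  forall k y, h (iter k f y) = iter k f (h y).
Proof. by move=> c; elim=> // k IH y /=; rewrite c IH. Qed.

Variables (G : Type) (act : G -> Y -> Y).
Hypothesis comm : forall x y, act x (T y) = T (act x y).

Lemma act_Tinv x y : act x (Tinv y) = Tinv (act x y).
Proof. by apply: (can_inj TK); rewrite -comm !KT. Qed.

Lemma act_Tpow x z y : act x (Tpow T Tinv z y) = Tpow T Tinv z (act x y).
Proof.
case: z => k; rewrite /Tpow; apply: iter_comm => y'; [exact: comm|exact: act_Tinv].
Qed.
End TP.

Section SU.
Variables (Y : topologicalType) (T Tinv : Y -> Y).
Hypotheses (TK : cancel T Tinv) (KT : cancel Tinv T).
Lemma scls_eq y t y' t' : scls T Tinv y t = scls T Tinv y' t' -> susp_nf T Tinv (y,t) = susp_nf T Tinv (y',t').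
Proof. rewrite /scls. move/eqmodP. by move/eqP. Qed.
Lemma scls_eqR y t y' t' : susp_nf T Tinv (y,t) = susp_nf T Tinv (y',t') -> scls T Tinv y t = scls T Tinv y' t'.
Proof. move=> h; rewrite /scls; apply/eqmodP. by rewrite /= /susp_rel h. Qed.

Lemma scls_T y t : scls T Tinv (T y) t = scls T Tinv y (t + 1).
Proof.
apply: scls_eqR; rewrite /susp_nf /=.
have -> : Num.floor (t + 1) = Num.floor t + 1.
  by rewrite floorDrz ?int_num1 // floor1.
rewrite TpowS // rmorphD /= rmorph1; congr (_, _); by rewrite opprD addrACA subrr addr0.
Qed.

Lemma fn_T y : fn T Tinv (T y) = fn T Tinv y.
Proof.
apply/seteqP; split => _ [t _ <-].
  by exists (t + 1) => //; rewrite scls_T.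
by exists (t - 1) => //; rewrite scls_T subrK.
Qed.

Lemma fn_Tinv y : fn T Tinv (Tinv y) = fn T Tinv y.
Proof. by rewrite -[in RHS](KT y) fn_T. Qed.

Lemma fn_eq y y0 : fn T Tinv y = fn T Tinv y0 -> exists z, y = Tpow T Tinv z y0.
Proof.
move=> e; have : fn T Tinv y (scls T Tinv y 0) by exists 0.
rewrite e => -[t _ /scls_eq [] h _]; exists (Num.floor t).
by rewrite h floor0.
Qed.

Lemma Lg_fix (G : Type) (act : G -> Y -> Y) (g : G) (n : int) :
  (forall x y, act x (T y) = T (act x y)) ->
  Lg T Tinv act g n%:~R -> exists y0, Tpow T Tinv n y0 = act g y0.
Proof.
move=> comm [_ [m]]; rewrite /sflow /sact => /scls_eq [].
rewrite floorDrz ?intr_int // intrKfloor => h _.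
exists (Tpow T Tinv (Num.floor (repr m).2) (repr m).1).
by rewrite -TpowD // addrC h act_Tpow.
Qed.
End SU.
Lemma act_contl (G Y : topologicalType) (act : G -> Y -> Y) :
  continuous (fun p : G * Y => act p.1 p.2) -> forall z, continuous (fun x => act x z).
Proof.
move=> hc z x.
apply: (@continuous_comp _ _ _ (fun x => (x, z)) (fun p : G * Y => act p.1 p.2)).
  by apply: cvg_pair; [exact: cvg_id | exact: cvg_cst].
exact: hc.
Qed.
Lemma act_contr (G Y : topologicalType) (act : G -> Y -> Y) :
  continuous (fun p : G * Y => act p.1 p.2) -> forall x, continuous (act x).
Proof.
move=> hc x z.
apply: (@continuous_comp _ _ _ (fun z => (x, z)) (fun p : G * Y => act p.1 p.2)).
  by apply: cvg_pair; [exact: cvg_cst | exact: cvg_id].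
exact: hc.
Qed.

Lemma closed_fix (Y : topologicalType) (h : Y -> Y) :
  hausdorff_space Y -> continuous h -> closed [set y | h y = y].
Proof.
move=> hY hc.
have -> : [set y | h y = y] = ~` [set y | h y <> y].
  by apply/seteqP; split => y /=; [move=> -> | move/contrapT].
apply: open_closedC; rewrite openE => y /= hy.
have hne : h y != y by apply/eqP.
move: hY; rewrite open_hausdorff => /(_ _ _ hne) [[A B] /= [hA yB] [oA oB AB0]].
have nA : nbhs (h y) A by apply: open_nbhs_nbhs; split => //; rewrite -inE.
have nB : nbhs y B by apply: open_nbhs_nbhs; split => //; rewrite -inE.
have nhA : nbhs y (h @^-1` A) by exact: (hc y _ nA).
rewrite /interior.
apply: filterS (filterI nhA nB) => w [/= hwA wB] hw.
move/eqP: AB0; rewrite -subset0 => /(_ w); apply; split => //.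
by rewrite -hw.
Qed.

Section PT.
Variables (Y : topologicalType) (s0 : Y).
Definition pY : Type := Y.
HB.instance Definition _ := Topological.copy pY Y.
HB.instance Definition _ := isPointed.Build pY s0.
Lemma cc (S : set Y) : compact S -> cover_compact S.
Proof. move=> cS. have := @compact_cover pY. move=> e. have : @compact pY S by []. rewrite e. exact. Qed.
End PT.

Lemma compact_discrete_finite (Y : topologicalType) (S F : set Y) :
  compact S -> S `<=` F ->
  (forall y, F y -> exists2 N, nbhs y N & N `&` F = [set y]) -> finite_set S.
Proof.
move=> cS SF hF.
pose f (y : Y) := \bigcup_(O in [set O | open O /\ O `&` F `<=` [set y]]) O.
have of_ y : open (f y) by apply: bigcup_open => O [].
have [->|/set0P [s0 _]] := eqVneq S set0; first exact: finite_set0.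
move: (@cc Y s0 S cS) => /(_ Y S f (fun i _ => of_ i)).
case.
  move=> s Ss; exists s => //.
  have [N sN NF] := hF s (SF s Ss).
  move: sN; rewrite nbhsE => -[B [oB Bs] BN].
  exists B => //; split => // w [Bw Fw].
  by rewrite -NF; split => //; apply: BN.
move=> D' _ Scov.
apply: (sub_finite_set _ (finite_fset D')) => s Ss.
have [i iD [W [oW WF] Ws]] := Scov s Ss.
by have /= -> := WF s (conj Ws (SF s Ss)).
Qed.

Lemma pigeon (T : Type) (S : set T) (f : nat -> T) :
  finite_set S -> (forall k, S (f k)) -> exists a b, (a < b)%N /\ f a = f b.
Proof.
move=> fS Sf; apply: contrapT => hn.
have inj : {in [set: nat] &, injective f}.
  move=> a b _ _ fab; case: (ltngtP a b) => // lt; exfalso; apply: hn.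
    by exists a, b.
  by exists b, a.
have := inj_card_eq inj => /eq_finite_set eqf.
apply: infinite_nat; rewrite -eqf.
by apply: (sub_finite_set _ fS) => _ [k _ <-].
Qed.

Section ActLaws.
Variables (G Y : Type) (mul : G -> G -> G) (inv : G -> G) (one : G) (act : G -> Y -> Y).
Hypotheses (act1 : forall y, act one y = y)
  (actM : forall x z y, act (mul x z) y = act x (act z y))
  (mulV : forall x, mul (inv x) x = one).
Lemma actVK x y : act (inv x) (act x y) = y.
Proof. by rewrite -actM mulV act1. Qed.
Lemma actKV x y : act x (act (inv x) y) = y.
Proof.
have inj : injective (act (inv x)) by apply: (can_inj (g := act (inv (inv x)))) => w; exact: actVK.
by apply: inj; rewrite actVK.
Qed.
Lemma actVV x y : act (inv (inv x)) y = act x y.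
Proof. by rewrite -{1}(actVK x y) actVK. Qed.
Lemma actVM x y w : act (inv (mul x y)) w = act (inv y) (act (inv x) w).
Proof.
have : act (mul x y) (act (inv y) (act (inv x) w)) = w by rewrite actM !actKV.
by move=> {1}<-; rewrite actVK.
Qed.
End ActLaws.

Lemma cpt_subgroup (G Y : topologicalType) (mul : G -> G -> G) (inv : G -> G) (one : G)
  (act : G -> Y -> Y) (g : G) (y0 : Y) (P : nat) :
  locally_compact_group mul inv one -> hausdorff_space Y ->
  continuous_action mul one act -> proper_action act -> (0 < P)%N ->
  iter P (act g) y0 = y0 -> exists2 K, compact_subgroup mul inv one K & K g.
Proof.
move=> [tg hG lcG] hY [act1 actM acont] prop P0 per.
have mV := tg_mulV tg.
have aVK := @actVK _ _ mul inv one act act1 actM mV.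
have aVV := @actVV _ _ mul inv one act act1 actM mV.
have aVM := @actVM _ _ mul inv one act act1 actM mV.
pose O := [set iter i (act g) y0 | i in `I_P].
have fO : finite_set O by apply: finite_image.
have cO : closed O by apply: compact_closed => //; exact: finite_compact.
have Oy0 : O y0 by exists 0%N.
have Oact : forall z, O z -> O (act g z).
  move=> _ [i /= iP <-]; case: (ltnP i.+1 P) => h; first by exists i.+1.
  have -> : act g (iter i (act g) y0) = iter i.+1 (act g) y0 by [].
  have -> : i.+1 = P by apply/eqP; rewrite eqn_leq h iP.
  by rewrite per.
have Oinv : forall z, O z -> O (act (inv g) z).
  move=> _ [[|i] /= iP <-].
    exists P.-1; first by rewrite /= prednK // ltnS leqnn ?ltn_predL.
    by rewrite -{2}per -(prednK P0) iterS aVK.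
  by exists i; [exact: ltnW | rewrite aVK].
pose K := [set x | forall z, O z -> O (act x z) /\ O (act (inv x) z)].
exists K; last by move=> z Oz; split; [exact: Oact | exact: Oinv].
split.
- pose K0 := fst @` ((fun p : G * Y => (act p.1 p.2, p.2)) @^-1` (O `*` [set y0])).
  have cK0 : compact K0.
    apply: continuous_compact.
      by apply: continuous_subspaceT => p; exact: cvg_fst.
    apply: prop; apply: compact_setX; [exact: finite_compact | exact: compact_set1].
  have clK : closed K.
    have -> : K = \bigcap_(z in O) (((fun x => act x z) @^-1` O) `&` ((fun x => act (inv x) z) @^-1` O)).
      by apply/seteqP; split => x hx z Oz; [exact: hx | have [] := hx z Oz].
    apply: closed_bigI => z Oz; apply: closedI; apply: preimage_closed => //.
      by move=> x _; exact: act_contl.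
    move=> x _; apply: (@continuous_comp _ _ _ inv (fun x => act x z)).
      exact: (tg_inv_cont tg).
    exact: act_contl.
  have -> : K = K0 `&` K.
    apply/seteqP; split => x; last by case.
    move=> Kx; split => //.
    by exists (x, y0) => //=; split => //=; have [] := Kx y0 Oy0.
  exact: compact_closedI.
- move=> z Oz; split; first by rewrite act1.
  by rewrite -[X in act _ X](act1 z) aVK.
- move=> x y Kx Ky z Oz; rewrite actM aVM; split.
    by have [+ _] := Kx _ (proj1 (Ky z Oz)).
  by have [_ +] := Ky _ (proj2 (Kx z Oz)).
- move=> x Kx z Oz; rewrite aVV; split; by have [] := Kx z Oz.
Qed.

Lemma orbit_periodic (G Y : topologicalType) (mul : G -> G -> G) (inv : G -> G) (one : G)
  (act : G -> Y -> Y) (g : G) (y0 : Y) (Fx : set Y) (KG : set G) :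
  hausdorff_space Y -> continuous_action mul one act ->
  compact_subgroup mul inv one KG -> KG g -> closed Fx ->
  (forall y, Fx y -> exists2 N, nbhs y N & N `&` Fx = [set y]) ->
  (forall i, Fx (iter i (act g) y0)) ->
  exists a b, (a < b)%N /\ iter a (act g) y0 = iter b (act g) y0.
Proof.
move=> hY [act1 actM acont] [cK K1 KM KV] Kg cF dF Fi.
pose S := ((fun x => act x y0) @` KG) `&` Fx.
have cS : compact S.
  apply: compact_closedI => //; apply: continuous_compact => //.
  by apply: continuous_subspaceT; exact: act_contl.
have fS : finite_set S.
  by apply: (@compact_discrete_finite _ S Fx cS) => // y [] _.
apply: (@pigeon _ S (fun i => iter i (act g) y0) fS) => i; split => //.
exists (iter i (mul g) one).
  by elim: i => //= i IH; apply: KM.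
elim: i => //= i IH; by rewrite actM IH.
Qed.

Lemma orb_closed (Y : Type) (f finv : Y -> Y) (y0 : Y) (P : nat) :
  cancel f finv -> (0 < P)%N -> iter P f y0 = y0 ->
  (forall z, [set iter i f y0 | i in `I_P] z -> [set iter i f y0 | i in `I_P] (f z)) /\
  (forall z, [set iter i f y0 | i in `I_P] z -> [set iter i f y0 | i in `I_P] (finv z)).
Proof.
move=> fK P0 per; split.
  move=> _ [i /= iP <-]; case: (ltnP i.+1 P) => h; first by exists i.+1.
  have -> : f (iter i f y0) = iter i.+1 f y0 by [].
  have -> : i.+1 = P by apply/eqP; rewrite eqn_leq h iP.
  by rewrite per; exists 0%N.
move=> _ [[|i] /= iP <-].
  exists P.-1; first by rewrite /= prednK // ltnS leqnn ?ltn_predL.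
  by rewrite -{2}per -(prednK P0) iterS fK.
by exists i; [exact: ltnW | rewrite fK].
Qed.

Lemma iter_inj (Y : Type) (f finv : Y -> Y) k : cancel f finv -> injective (iter k f).
Proof.
move=> fK; elim: k => [|k IH] a b //= e.
by apply: IH; apply: (can_inj fK).
Qed.

Lemma core (G Y : topologicalType) (Z : Type) (mul : G -> G -> G) (inv : G -> G) (one : G)
  (act : G -> Y -> Y) (g : G) (U V : Y -> Y) (m : nat) (Fx : set Y) (fnf : Y -> Z) :
  locally_compact_group mul inv one -> hausdorff_space Y ->
  continuous_action mul one act -> proper_action act ->
  cancel U V -> cancel V U -> (forall x y, act x (U y) = U (act x y)) -> (0 < m)%N ->
  (forall y, Fx y <-> iter m U y = act g y) ->
  (forall y, fnf (U y) = fnf y) ->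
  (forall y y0, fnf y = fnf y0 -> exists k, y = iter k U y0 \/ y = iter k V y0) ->
  closed Fx ->
  (Fx = set0 \/ (forall y, Fx y -> exists2 N, nbhs y N & N `&` Fx = [set y])) ->
  (exists y0, Fx y0) ->
  (forall C, finite_set [set y | Fx y /\ fnf y = C]) <->
  exists2 K, compact_subgroup mul inv one K & K g.
Proof.
move=> lcg hY ca prop UV VU actU m0 hfix fnU fnorb cF disc [y1 Fy1].
have FU : forall k y, Fx y -> Fx (iter k U y).
  move=> k y /hfix Fy; apply/hfix.
  by rewrite -iterD addnC iterD Fy (@iter_comm _ U (act g) (actU g)).
have Fg : forall i y, Fx y -> iter i (act g) y = iter (i * m) U y.
  move=> i y Fy; elim: i => // i IH.
  rewrite mulSn iterD -IH /=.
  have /hfix -> // : Fx (iter i (act g) y).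
  by rewrite IH; exact: FU.
have perQ : forall Q y j, iter Q U y = y -> iter (j * Q) U y = y.
  move=> Q y j hQ; elim: j => // j IH; by rewrite mulSn iterD IH hQ.
split.
  move=> hfin.
  have fnk : forall k, fnf (iter k U y1) = fnf y1.
    by elim=> //= k IH; rewrite fnU IH.
  have [a [b [ab e]]] := @pigeon _ _ (fun k => iter k U y1) (hfin (fnf y1))
    (fun k => conj (FU k y1 Fy1) (fnk k)).
  have hQ : iter (b - a) U y1 = y1.
    apply: (@iter_inj _ U V a UV); rewrite /= e -iterD subnKC //; exact: ltnW.
  apply: (@cpt_subgroup _ _ mul inv one act g y1 (b - a)) => //.
    by rewrite subn_gt0.
  by rewrite Fg // mulnC perQ.
move=> [KG cKG Kg] C.
case: (pselect (exists y0, Fx y0 /\ fnf y0 = C)) => [[y0 [Fy0 <-]] | nE]; last first.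
  apply: (sub_finite_set _ (finite_set0 Y)) => y [Fy fy]; apply: nE; by exists y.
case: disc => [F0 | dF]; first by rewrite F0 in Fy0.
have [a [b [ab e]]] := @orbit_periodic _ _ mul inv one act g y0 Fx KG hY ca cKG Kg cF dF
  (fun i => ltac:(rewrite Fg //; exact: FU)).
rewrite !Fg // in e.
pose Q := ((b - a) * m)%N.
have Q0 : (0 < Q)%N by rewrite muln_gt0 subn_gt0 ab.
have hQ : iter Q U y0 = y0.
  apply: (@iter_inj _ U V (a * m) UV); rewrite /= e -iterD /Q -mulnDl subnKC //; exact: ltnW.
have [cU cV] := @orb_closed _ U V y0 Q UV Q0 hQ.
apply: (sub_finite_set _ (finite_image (fun i => iter i U y0) (finite_II Q))) => y [_ /fnorb [k [->|->]]].
  elim: k => [|k IH]; [by exists 0%N | exact: cU].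
elim: k => [|k IH]; [by exists 0%N | exact: cV].
Qed.


Lemma iter_cont (Y : topologicalType) (f : Y -> Y) k : continuous f -> continuous (iter k f).
Proof.
move=> hf; elim: k => [|k IH] x /=; first exact: cvg_id.
exact: (continuous_comp (IH x) (hf _)).
Qed.

Theorem corollary5p8
  (G : topologicalType) (mul : G -> G -> G) (inv : G -> G) (one : G)
  (Y : topologicalType) (d : nat) (A : atlas Y d)
  (act : G -> Y -> Y) (T Tinv : Y -> Y) (g : G) :
  locally_compact_group mul inv one ->
  smooth_manifold A ->
  continuous_action mul one act ->
  (forall x : G, smooth_map A (act x)) ->
  proper_action act ->
  cocompact_action act ->
  diffeomorphism A T Tinv ->
  (forall (x : G) (y : Y), act x (T y) = T (act x y)) ->
  (forall n : int, n != 0 ->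
     let h := act (inv g) \o Tpow T Tinv n in
     (fixpts h = set0 \/ discrete_subset (fixpts h)) /\
     (forall y, fixpts h y -> forall i, at_dom A i y ->
        \det (1%:M - jac h i y) != 0)) ->
  forall n : int, Lg T Tinv act g n%:~R ->
    (forall C : set (susp T Tinv),
       finite_set [set y | fixpts (act (inv g) \o Tpow T Tinv n) y /\
                           fn T Tinv y = C])
    <-> exists2 K : set G, compact_subgroup mul inv one K & K g.
Proof.
move=> lcg [hY _ _] ca _ prop _ [[cT _] [cTi _] TK KT] comm hyp n Ln.
have n0 : n != 0.
  by case: Ln => + _; apply: contra => /eqP ->.
have [hd _] := hyp n n0.
have [tg _ _] := lcg.
have [act1 actM acont] := ca.
have mV := tg_mulV tg.
have aVK := @actVK _ _ mul inv one act act1 actM mV.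
have aKV := @actKV _ _ mul inv one act act1 actM mV.
pose Fx := fixpts (act (inv g) \o Tpow T Tinv n).
have hfix0 : forall y, Fx y <-> Tpow T Tinv n y = act g y.
  move=> y; split => /= h.
    by rewrite -[in RHS]h aKV.
  by rewrite /Fx /fixpts /= h aVK.
have cTp : continuous (Tpow T Tinv n).
  by case: n {hyp Ln n0 hd Fx hfix0} => k; apply: iter_cont.
have cF : closed Fx.
  apply: closed_fix => // x.
  apply: (continuous_comp (cTp x)); exact: act_contr.
have [U [V [m [hUV [UV [VU [actU [m0 hTp]]]]]]]] :
  exists U V m, ((U = T /\ V = Tinv) \/ (U = Tinv /\ V = T)) /\ cancel U V /\
    cancel V U /\ (forall x y, act x (U y) = U (act x y)) /\ (0 < m)%N /\
    forall y, Tpow T Tinv n y = iter m U y.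
  case: n {hyp Ln hd Fx hfix0 cTp cF} n0 => k nk.
    exists T, Tinv, k; split; first by left.
    do 3!(split => //); split => //.
    by rewrite lt0n; apply: contra nk => /eqP ->.
  exists Tinv, T, k.+1; split; first by right.
  do 2!(split => //); split; last by [].
  exact: act_Tinv.
apply: (@core G Y _ mul inv one act g U V m Fx (fn T Tinv)) => //.
- by move=> y; rewrite hfix0 hTp.
- case: hUV => -[-> _] y; [exact: (@fn_T _ _ _ TK) | exact: (@fn_Tinv _ _ _ TK KT)].
- move=> y y0 /fn_eq [[k|k] ->].
    case: hUV => -[-> ->]; exists k; [by left | by right].
  case: hUV => -[-> ->]; exists k.+1; [by right | by left].
- have [y0 hy0] := @Lg_fix _ _ _ TK KT _ _ _ _ comm Ln.
  by exists y0; apply/hfix0.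
Qed.
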